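(* Let $I$ be a finite set of players. For each $\nu\in I$ let $X_\nu\subset\mathbb{R}^{n_\nu}$, let $\succeq_\nu$ be a binary relation on $\mathbb{R}^n=\prod_{\nu\in I}\mathbb{R}^{n_\nu}$, and let $K_\nu:X_{-\nu}\rightrightarrows X_\nu$ be a set-valued map, where $X_{-\nu}=\prod_{j\neq\nu}X_j$. Set $X=\prod_{\nu\in I}X_\nu$ and $K(x)=\prod_{\nu\in I}K_\nu(x^{-\nu})$. Assume that for each $\nu\in I$: (1) $K_\nu$ has non-empty, closed and convex values; (2) $U^s_\nu(x)$ is convex for all $x\in\mathbb{R}^n$; (3) $x^\nu\in\operatorname{cl}(U^s_\nu(x))$ for all $x\in\mathbb{R}^n$. Define $N_0:\mathbb{R}^n\rightrightarrows\mathbb{R}^n$ by $N_0(x)=\prod_{\nu\in I}\big(N_\nu(x)\setminus\{0\}\big)$. If $\hat x$ is a generalized Nash equilibrium, then $\hat x$ solves the Stampacchia quasivariational inequality problem associated to $N_0$ and $K$, i.e. $\hat x\in K(\hat x)$ and there exists $\hat x^*\in N_0(\hat x)$ with $\langle\hat x^*,y-\hat x\rangle\ge0$ for all $y\in K(\hat x)$.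
   Context: Vectors $x\in\mathbb{R}^n$ are written $x=(x^\nu,x^{-\nu})$ with $x^\nu\in\mathbb{R}^{n_\nu}$ and $x^{-\nu}$ the components of the other players. For $w^{-\nu}$, the induced relation on $\mathbb{R}^{n_\nu}$ is $x^\nu\succeq_{\nu,w^{-\nu}}y^\nu$ iff $(x^\nu,w^{-\nu})\succeq_\nu(y^\nu,w^{-\nu})$, and $\succ_{\nu,w^{-\nu}}$ denotes its asymmetric part ($a\succ b$ iff $a\succeq b$ and not $b\succeq a$). For $x\in\mathbb{R}^n$, $U^s_\nu(x)=\{y^\nu\in\mathbb{R}^{n_\nu}: y^\nu\succ_{\nu,x^{-\nu}}x^\nu\}$. For $A\subset\mathbb{R}^m$ and $z\in\mathbb{R}^m$ (no convexity, closedness or membership $z\in A$ required), the normal cone is $\mathscr{N}_A(z)=\{z^*\in\mathbb{R}^m:\langle z^*,y-z\rangle\le 0\ \forall y\in A\}$ if $A\neq\emptyset$ and $\mathscr{N}_A(z)=\mathbb{R}^m$ if $A=\emptyset$. Then $N_\nu(x)=\mathscr{N}_{U^s_\nu(x)}(x^\nu)\subset\mathbb{R}^{n_\nu}$. A point $\hat x\in K(\hat x)$ is a generalized Nash equilibrium if for each $\nu\in I$ there is no $x^\nu\in K_\nu(\hat x^{-\nu})$ with $x^\nu\succ_{\nu,\hat x^{-\nu}}\hat x^\nu$. *)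

(* Defs.v *)
From HB Require Import structures.
From mathcomp Require Import all_boot all_order all_algebra.
From mathcomp Require Import all_classical all_reals all_analysis.
Unset Printing Implicit Defensive.
Import Order.TTheory GRing.Theory Num.Theory numFieldNormedType.Exports.
Local Open Scope classical_set_scope.
Local Open Scope ring_scope.

(* R^{n_nu} is 'rV[R]_(n nu); a strategy profile x in R^n = prod_nu R^{n_nu}
   is a dependent function giving each player's block. *)
Definition profile (R : realType) {I : finType} (n : I -> nat) :=
  forall nu : I, 'rV[R]_(n nu).

Section GNEP.
Context {R : realType} {I : finType} {n : I -> nat}.
Local Notation profile := (profile R n).

Definition dotv {m : nat} (u v : 'rV[R]_m) : R := \sum_(i < m) u 0 i * v 0 i.

Definition dotp (u v : profile) : R := \sum_(nu : I) dotv (u nu) (v nu).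

Definition subp (u v : profile) : profile := fun nu => u nu - v nu.

(* (y^nu, x^{-nu}) : replace the nu-th block of x by y. *)
Definition upd (x : profile) (nu : I) (y : 'rV[R]_(n nu)) : profile :=
  fun j => match nu =P j with
           | ReflectT e => eq_rect nu (fun k => 'rV[R]_(n k)) y j e
           | ReflectF _ => x j
           end.

Definition agree_off (nu : I) (x w : profile) := forall j, j != nu -> x j = w j.

Definition strict_part {T : Type} (r : T -> T -> Prop) (a b : T) :=
  r a b /\ ~ r b a.

Definition Us (pref : I -> profile -> profile -> Prop) (nu : I) (x : profile)
  : set 'rV[R]_(n nu) :=
  [set y | strict_part (pref nu) (upd x nu y) (upd x nu (x nu))].

(* normal cone, with the convention N_emptyset(z) = R^m *)
Definition normal_cone {m : nat} (A : set 'rV[R]_m) (z : 'rV[R]_m)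
  : set 'rV[R]_m :=
  if A == set0 then setT
  else [set zs | forall y, A y -> dotv zs (y - z) <= 0].

Definition Nnu (pref : I -> profile -> profile -> Prop) (nu : I) (x : profile)
  : set 'rV[R]_(n nu) := normal_cone (Us pref nu x) (x nu).

Definition N0 (pref : I -> profile -> profile -> Prop) (x : profile)
  : set profile :=
  [set xs | forall nu, Nnu pref nu x (xs nu) /\ xs nu != 0].

Definition inX (X : forall nu : I, set 'rV[R]_(n nu)) (x : profile) :=
  forall nu, X nu (x nu).

Definition inX_off (X : forall nu : I, set 'rV[R]_(n nu)) (nu : I) (x : profile) :=
  forall j, j != nu -> X j (x j).

(* K(x) = prod_nu K_nu(x^{-nu});  K_nu is represented as a map on profiles
   that only depends on x^{-nu} (see hypotheses of the theorem). *)
Definition Kset (K : forall nu : I, profile -> set 'rV[R]_(n nu)) (x : profile)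
  : set profile := [set y | forall nu, K nu x (y nu)].

Definition is_GNE (X : forall nu : I, set 'rV[R]_(n nu))
  (pref : I -> profile -> profile -> Prop)
  (K : forall nu : I, profile -> set 'rV[R]_(n nu)) (xh : profile) :=
  inX X xh /\ Kset K xh xh /\
  forall nu, ~ exists y, K nu xh y /\
     strict_part (pref nu) (upd xh nu y) (upd xh nu (xh nu)).

Definition solves_SQVI (N : profile -> set profile)
  (K : forall nu : I, profile -> set 'rV[R]_(n nu)) (xh : profile) :=
  Kset K xh xh /\
  exists xs, N xh xs /\ forall y, Kset K xh y -> 0 <= dotp xs (subp y xh).

End GNEP.

(* Main.v *)
Require Import Defs.
From HB Require Import structures.
From mathcomp Require Import all_boot all_order all_algebra.
From mathcomp Require Import all_classical all_reals all_analysis.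
From mathcomp Require Import ring lra.
Import Order.TTheory GRing.Theory Num.Theory numFieldNormedType.Exports.
Local Open Scope classical_set_scope.
Local Open Scope ring_scope.
Section Dot.
Context {R : realType}.

Lemma dotvC m (u v : 'rV[R]_m) : dotv u v = dotv v u.
Proof. by apply: eq_bigr => i _; rewrite mulrC. Qed.

Lemma dotvDl m (u v w : 'rV[R]_m) : dotv (u + v) w = dotv u w + dotv v w.
Proof. by rewrite /dotv -big_split; apply: eq_bigr => i _; rewrite mxE mulrDl. Qed.

Lemma dotvZl m a (u w : 'rV[R]_m) : dotv (a *: u) w = a * dotv u w.
Proof. by rewrite /dotv mulr_sumr; apply: eq_bigr => i _; rewrite mxE mulrA. Qed.

Lemma dotvNl m (u w : 'rV[R]_m) : dotv (- u) w = - dotv u w.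
Proof. by rewrite -scaleN1r dotvZl mulN1r. Qed.

Lemma dotvBl m (u v w : 'rV[R]_m) : dotv (u - v) w = dotv u w - dotv v w.
Proof. by rewrite dotvDl dotvNl. Qed.

Lemma dotvDr m (u v w : 'rV[R]_m) : dotv w (u + v) = dotv w u + dotv w v.
Proof. by rewrite dotvC dotvDl ![dotv _ w]dotvC. Qed.

Lemma dotvZr m a (u w : 'rV[R]_m) : dotv w (a *: u) = a * dotv w u.
Proof. by rewrite dotvC dotvZl [dotv _ w]dotvC. Qed.

Lemma dotvBr m (u v w : 'rV[R]_m) : dotv w (u - v) = dotv w u - dotv w v.
Proof. by rewrite dotvC dotvBl ![dotv _ w]dotvC. Qed.

Lemma dotvv_ge0 m (u : 'rV[R]_m) : 0 <= dotv u u.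
Proof. by apply: sumr_ge0 => i _; rewrite -expr2 sqr_ge0. Qed.

Lemma dotvv_eq0 m (u : 'rV[R]_m) : dotv u u = 0 -> u = 0.
Proof.
move=> /eqP; rewrite psumr_eq0 => [/allP H|i _]; last by rewrite -expr2 sqr_ge0.
apply/rowP => i; rewrite mxE.
have := H i (mem_index_enum _); rewrite implyTb -expr2 sqrf_eq0.
by move/eqP.
Qed.

Lemma cont_sum (T : topologicalType) (J : Type) (r : seq J) (F : J -> T -> R) :
  (forall j, continuous (F j)) -> continuous (fun x => \sum_(j <- r) F j x).
Proof.
move=> Fc; elim: r => [|j r IH].
  under eq_fun do rewrite big_nil; exact: cst_continuous.
under eq_fun do rewrite big_cons.
by move=> x; apply: continuousD; [exact: Fc | exact: IH].
Qed.

Lemma dotv_contl m (c : 'rV[R]_m) : continuous (fun p : 'rV[R]_m => dotv p c).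
Proof.
apply: cont_sum => i x; apply: continuousM; last exact: cst_continuous.
exact: coord_continuous.
Qed.

Lemma dotv_contr m (c : 'rV[R]_m) : continuous (fun p : 'rV[R]_m => dotv c p).
Proof. by under eq_fun do rewrite dotvC; exact: dotv_contl. Qed.

End Dot.
Section Conv.
Context {R : realType}.

Definition cvx {m} (C : set 'rV[R]_m) :=
  forall x y (t : R), C x -> C y -> 0 <= t -> t <= 1 -> C (t *: x + (1 - t) *: y).

Lemma cvx_bridge {m} {A : set 'rV[R]_m} : convex_set A -> cvx A.
Proof.
move=> cA x y t Ax Ay t0 t1.
have := cA x y (Itv01 t0 t1) (mem_set Ax) (mem_set Ay).
by rewrite inE.
Qed.

Lemma conv_comb m (C : set 'rV[R]_m) : cvx C -> forall k (lam : 'I_k -> R)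
  (s : 'I_k -> 'rV[R]_m), (forall i, 0 <= lam i) -> \sum_i lam i = 1 ->
  (forall i, C (s i)) -> C (\sum_i lam i *: s i).
Proof.
move=> cC; elim=> [|k IH] lam s l0 l1 sC.
  by move: l1; rewrite big_ord0 => /eqP; rewrite eq_sym oner_eq0.
rewrite big_ord_recl; move: l1; rewrite big_ord_recl => l1.
set mu := \sum_(i < k) lam (lift ord0 i) in l1 *.
have mu0 : 0 <= mu by apply: sumr_ge0 => i _.
have [/eqP mueq0|mun0] := eqVneq mu 0.
  have z : forall i : 'I_k, lam (lift ord0 i) = 0.
    move: mueq0; rewrite psumr_eq0 // => /allP H i.
    by have /implyP/(_ isT)/eqP := H i (mem_index_enum _).
  rewrite big1 ?addr0; last by move=> i _; rewrite z scale0r.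
  move/eqP: mueq0 => mueq0.
  by move: l1; rewrite mueq0 addr0 => ->; rewrite scale1r.
have mup : 0 < mu by rewrite lt_neqAle eq_sym mun0.
have Cy : C (\sum_(i < k) (lam (lift ord0 i) / mu) *: s (lift ord0 i)).
  apply: IH; [by move=> i; rewrite divr_ge0 | by rewrite -mulr_suml mulfV | by move=> i; apply: sC].
have -> : \sum_(i < k) lam (lift ord0 i) *: s (lift ord0 i) =
   mu *: \sum_(i < k) (lam (lift ord0 i) / mu) *: s (lift ord0 i).
  rewrite scaler_sumr; apply: eq_bigr => i _; rewrite scalerA.
  by rewrite mulrCA mulfV // mulr1.
set Y := \sum_(i < k) (lam (lift ord0 i) / mu) *: s (lift ord0 i) in Cy *.
have -> : mu = 1 - lam ord0 by rewrite -l1 addrAC subrr add0r.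
apply: cC; [exact: sC | exact: Cy | exact: l0 | by rewrite -l1 lerDl].
Qed.

End Conv.
Section Step1.
Context {R : realType}.

Lemma neg_quad (a b : R) : 0 <= b ->
  (forall t, 0 < t -> t <= 1 -> 0 <= 2 * t * a + t ^+ 2 * b) -> 0 <= a.
Proof.
move=> b0 H; rewrite leNgt; apply/negP => a0.
have ba : 0 < b - a by lra.
pose t := - a / (b - a).
have ht : t * (b - a) = - a by rewrite /t mulrVK // unitfE gt_eqF.
have t0 : 0 < t by rewrite /t divr_gt0 // oppr_gt0.
have t1 : t <= 1 by rewrite /t ler_pdivrMr // mul1r; lra.
have := H t t0 t1; nra.
Qed.

Lemma bounded1 m (A : set 'rV[R]_m) : (forall x, A x -> `|x| <= 1) -> bounded_set A.
Proof.
move=> H; rewrite /= /bounded_near; exists 1; split; first exact: num_real.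
by move=> M M1 x Ax; apply: le_trans (H x Ax) _; apply: ltW.
Qed.

Lemma closed_pre (T : topologicalType) (f : T -> R) (A : set R) :
  continuous f -> closed A -> closed [set x | A (f x)].
Proof. by move=> fc Acl; exact: ((continuous_closedP f).1 fc A Acl). Qed.

End Step1.
Section FinSep.
Context {R : realType}.

Definition Lc {m k} (s : 'I_k -> 'rV[R]_m) (l : 'rV[R]_k) : 'rV[R]_m :=
  \sum_i l 0 i *: s i.

Lemma Lc_lin m k (s : 'I_k -> 'rV[R]_m) a b x y :
  Lc s (a *: x + b *: y) = a *: Lc s x + b *: Lc s y.
Proof.
rewrite /Lc !scaler_sumr -big_split; apply: eq_bigr => i _.
by rewrite !mxE scalerDl !scalerA.
Qed.

Lemma Lc_delta m k (s : 'I_k -> 'rV[R]_m) j : Lc s (delta_mx 0 j) = s j.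
Proof.
rewrite /Lc (bigD1 j) //= big1 ?addr0; first by rewrite mxE !eqxx scale1r.
by move=> i ij; rewrite mxE eqxx /= (negbTE ij) scale0r.
Qed.

Lemma sum_delta k (j : 'I_k) : \sum_i (delta_mx 0 j : 'rV[R]_k) 0 i = 1.
Proof.
rewrite (bigD1 j) //= big1 ?addr0; first by rewrite mxE !eqxx.
by move=> i ij; rewrite mxE eqxx /= (negbTE ij).
Qed.

Lemma Lc_cont m k (s : 'I_k -> 'rV[R]_m) j :
  continuous (fun l : 'rV[R]_k => Lc s l 0 j).
Proof.
have E : (fun l : 'rV[R]_k => Lc s l 0 j) = (fun l => \sum_(i <- index_enum 'I_k) l 0 i * s i 0 j).
  by apply: funext => l; rewrite /Lc summxE; apply: eq_bigr => i _; rewrite mxE.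
rewrite E; apply: cont_sum => i x; apply: continuousM; last exact: cst_continuous.
exact: coord_continuous.
Qed.

Lemma fin_sep m (C : set 'rV[R]_m) : cvx C -> ~ C 0 ->
  forall k (s : 'I_k.+1 -> 'rV[R]_m), (forall i, C (s i)) ->
  exists z, z != 0 /\ forall i, 0 <= dotv z (s i).
Proof.
move=> cC C0 k s sC.
pose D := [set l : 'rV[R]_k.+1 | (forall i, 0 <= l 0 i) /\ \sum_i l 0 i = 1].
pose q l := dotv (Lc s l) (Lc s l).
have Dd : forall j, D (delta_mx 0 j).
  move=> j; split; last exact: sum_delta.
  by move=> i; rewrite mxE; exact: ler0n.
have D0 : D !=set0 by exists (delta_mx 0 ord0).
have Dcomp : compact D.
  apply: bounded_closed_compact.
    apply: bounded1 => l [l0 l1]; rewrite [leLHS]/Num.norm /= mx_normrE.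
    apply: bigmax_le => // ij _; rewrite ger0_norm; last first.
      by rewrite [ij.1]ord1; exact: l0.
    rewrite -l1 [ij.1]ord1 (bigD1 ij.2) //= lerDl.
    by apply: sumr_ge0 => i _.
  have -> : D = \bigcap_(i in setT) [set l : 'rV[R]_k.+1 | [set x : R | 0 <= x] (l 0 i)]
                `&` [set l | [set x : R | x = 1] (\sum_i l 0 i)].
    apply/seteqP; split => l.
      by move=> [l0 l1]; split => // i _; exact: l0.
    by move=> [l0 l1]; split => // i; exact: l0.
  apply: closedI.
    apply: closed_bigI => i _; apply: closed_pre; last exact: closed_ge.
    exact: coord_continuous.
  apply: closed_pre; last exact: closed_eq.
  apply: cont_sum => i.
  exact: coord_continuous.
have qc : continuous q.
  apply: cont_sum => j x; apply: continuousM; exact: Lc_cont.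
have [ls lsD lsmin] := compact_EVT_min D0 Dcomp (continuous_subspaceT qc).
move: lsD; rewrite inE => -[ls0 ls1].
set z := Lc s ls.
have zC : C z.
  exact: (@conv_comb _ m C cC k.+1 (fun i => ls 0 i) s ls0 ls1 sC).
have z0 : z != 0 by apply/eqP => ez; apply: C0; rewrite -ez.
exists z; split => // j.
have [d dE] : exists d, d = s j - z by eexists.
have key : 0 <= dotv z d.
  apply: (@neg_quad _ _ (dotv d d)); first exact: dotvv_ge0.
  move=> t t0 t1.
  pose lt := (1 - t) *: ls + t *: delta_mx 0 j.
  have ltD : D lt.
    split.
      move=> i; rewrite !mxE; apply: addr_ge0; apply: mulr_ge0.
      - by rewrite subr_ge0.
      - exact: ls0.
      - exact: ltW.
      - exact: ler0n.
    under eq_bigr do rewrite !mxE.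
    rewrite big_split /= -!mulr_sumr ls1.
    have -> : \sum_(i < k.+1) ((i == j)%:R : R) = 1.
      by rewrite (bigD1 j) //= big1 ?addr0 ?eqxx // => i ij; rewrite (negbTE ij).
    ring.
  have := lsmin lt (mem_set ltD).
  rewrite /q /lt Lc_lin Lc_delta -/z.
  have -> : (1 - t) *: z + t *: s j = z + t *: d.
    by rewrite dE scalerBr scalerBl scale1r addrA [LHS]addrAC.
  rewrite !dotvDl !dotvDr !dotvZl !dotvZr [dotv d z]dotvC.
  move=> H; nra.
have : dotv z (s j) = dotv z z + dotv z d.
  by rewrite dE dotvBr addrC subrK.
move=> ->; apply: addr_ge0 => //; exact: dotvv_ge0.
Qed.

End FinSep.
Section Sep.
Context {R : realType}.

Lemma sep m (C : set 'rV[R]_m) : cvx C -> ~ C 0 -> C !=set0 ->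
  exists p, p != 0 /\ forall c, C c -> dotv p c <= 0.
Proof.
move=> cC C0 [c0 Cc0].
case: m C cC C0 c0 Cc0 => [|m] C cC C0 c0 Cc0.
  by exfalso; apply: C0; rewrite -(thinmx0 c0).
pose S := [set p : 'rV[R]_m.+1 | `|p| = 1].
have Scomp : compact S.
  apply: bounded_closed_compact.
    by apply: bounded1 => p ->.
  apply: (@closed_pre _ _ (fun p : 'rV[R]_m.+1 => `|p|) [set x | x = 1]).
    exact: norm_continuous.
  exact: closed_eq.
pose f (c : 'rV[R]_m.+1) := S `&` [set p | dotv p c <= 0].
have Hfin : \bigcap_(c in C) f c !=set0.
  move: Scomp; rewrite compact_In0 => /(_ _ C f); apply.
    exists (fun c => [set p | dotv p c <= 0]) => // c _.
    apply: (@closed_pre _ _ (fun p : 'rV[R]_m.+1 => dotv p c) [set x | x <= 0]).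
      exact: dotv_contl.
    exact: closed_le.
  move=> D' D'C.
  pose l := c0 :: finmap.enum_fset D'.
  pose s := fun i : 'I_(size (finmap.enum_fset D')).+1 => nth c0 l i.
  have sC : forall i, C (s i).
    rewrite /s => -[[|i] hi] //=; apply/set_mem/D'C; exact: mem_nth.
  have [z [z0 zs]] := @fin_sep _ _ C cC C0 _ s sC.
  exists (- (`|z|^-1) *: z) => c /= cD'.
  split.
    by rewrite /S /= normrZ normrN ger0_norm ?invr_ge0 // mulVf // normr_eq0.
  have cl : c \in l by rewrite in_cons cD' orbT.
  have il : (index c l < (size (finmap.enum_fset D')).+1)%N by have := cl; rewrite -index_mem.
  have := zs (Ordinal il); rewrite /s /= nth_index //.
  rewrite dotvZl mulNr oppr_le0 => H; apply: mulr_ge0 => //.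
move: Hfin => [p Hp].
exists p; split; last by move=> c Cc; have [] := Hp c Cc.
have [Sp _] := Hp c0 Cc0.
by apply/eqP => p0; move: Sp; rewrite /S /= p0 normr0 => /eqP; rewrite eq_sym oner_eq0.
Qed.

End Sep.
Section Local.
Context {R : realType}.

Lemma local_sep m (U Kc : set 'rV[R]_m) (x0 : 'rV[R]_m) :
  convex_set U -> cvx Kc -> Kc x0 -> closure U x0 ->
  (forall y, Kc y -> ~ U y) ->
  exists p, p != 0 /\ normal_cone U x0 p /\
     (forall y, Kc y -> 0 <= dotv p (y - x0)).
Proof.
move=> cU cK Kx0 clU disj.
have [u0 Uu0] : U !=set0.
  by have [u [Uu _]] := clU setT filterT; exists u.
pose C := [set c | exists u k, U u /\ Kc k /\ c = u - k].
have cC : cvx C.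
  move=> x y t [u1 [k1 [U1 [K1 ->]]]] [u2 [k2 [U2 [K2 ->]]]] t0 t1.
  exists (t *: u1 + (1 - t) *: u2), (t *: k1 + (1 - t) *: k2); split.
    exact: (cvx_bridge cU _ _ _ U1 U2 t0 t1).
  split; first exact: (cK _ _ _ K1 K2 t0 t1).
  by rewrite !scalerBr addrACA opprD.
have C0 : ~ C 0.
  move=> [u [k [Uu [Kk /eqP]]]]; rewrite eq_sym subr_eq0 => /eqP euk.
  by apply: (disj k Kk); rewrite -euk.
have [p [p0 Hp]] := @sep _ m C cC C0 (ex_intro _ (u0 - x0) (ex_intro _ u0 (ex_intro _ x0 (conj Uu0 (conj Kx0 erefl))))).
exists p; split => //; split.
  rewrite /normal_cone; have /negbTE -> : U != set0.
    by apply/eqP => U0; move: Uu0; rewrite U0.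
  move=> u Uu; apply: Hp; exists u, x0; do 2 split => //.
move=> y Ky; rewrite leNgt; apply/negP => hlt.
pose g v := dotv p (v - y).
have gc : continuous g.
  move=> v; rewrite /g.
  have -> : (fun v0 => dotv p (v0 - y)) = (fun v0 => dotv p v0 - dotv p y).
    by apply: funext => v0; rewrite dotvBr.
  apply: continuousB; [exact: dotv_contr | exact: cst_continuous].
have gx0 : 0 < g x0 by rewrite /g -opprB dotvC dotvNl dotvC oppr_gt0.
have : \forall v \near x0, 0 < g v.
  exact: (@cvgr_gt _ _ _ _ g (g x0) (gc x0) 0 gx0).
move=> /clU [u [Uu gu]].
have : dotv p (u - y) <= 0 by apply: Hp; exists u, y.
by rewrite leNgt gu.
Qed.

End Local.

Theorem theorem2 (R : realType) (I : finType) (n : I -> nat)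
  (X : forall nu : I, set 'rV[R]_(n nu))
  (pref : I -> profile R n -> profile R n -> Prop)
  (K : forall nu : I, profile R n -> set 'rV[R]_(n nu))
  (* K_nu : X_{-nu} =>> X_nu depends only on x^{-nu} *)
  (hKdep : forall nu x w, agree_off nu x w -> K nu x = K nu w)
  (hKX : forall nu x, inX_off X nu x -> K nu x `<=` X nu)
  (* (1) non-empty, closed, convex values *)
  (h1 : forall nu x, inX_off X nu x ->
          K nu x !=set0 /\ closed (K nu x) /\ convex_set (K nu x))
  (* (2) U^s_nu(x) convex *)
  (h2 : forall nu (x : profile R n), convex_set (Us pref nu x))
  (* (3) x^nu in cl U^s_nu(x) *)
  (h3 : forall nu (x : profile R n), closure (Us pref nu x) (x nu))
  (xh : profile R n) :
  is_GNE X pref K xh -> solves_SQVI (N0 pref) K xh.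
Proof.
move=> [hX [hK hN]]; split => //.
have Hp : forall nu, exists p : 'rV[R]_(n nu), Nnu pref nu xh p /\ p != 0 /\
    forall y, K nu xh y -> 0 <= dotv p (y - xh nu).
  move=> nu.
  have hoff : inX_off X nu xh by move=> j _; exact: hX j.
  have [_ [_ Kcv]] := h1 nu xh hoff.
  have disj : forall y, K nu xh y -> ~ Us pref nu xh y.
    by move=> y Ky Uy; apply: (hN nu); exists y.
  have [p [p0 [pN pK]]] := @local_sep _ _ _ _ _ (h2 nu xh) (cvx_bridge Kcv) (hK nu) (h3 nu xh) disj.
  by exists p.
pose xs : profile R n := fun nu => projT1 (cid (Hp nu)).
exists xs; split.
  by move=> nu; have [? [? _]] := projT2 (cid (Hp nu)).
move=> y Ky; rewrite /dotp; apply: sumr_ge0 => nu _.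
have [_ [_ H]] := projT2 (cid (Hp nu)).
exact: H.
Qed.
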